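(* There exist a sequence $(w_n)_{n\ge1}$ of words over $\{0,1\}$ and a sequence $(\ell_n)_{n\ge1}$ of positive integers such that for every $n$: $|w_n|=2^n$, $\mathrm{even}(w_{n+1})=w_n$, $w_n$ is $\ell_n$-perfect, and $(\ell_n)_{n\ge1}$ is non-decreasing and unbounded. Furthermore, this can be achieved with $w_1=01$.
   Context: For a finite word $z=a_1\cdots a_m$, $\mathrm{even}(z)=a_2a_4\cdots$. For words $w,u$, $|w|^{al}_u=|\{i: w[i..i+|u|-1]=u,\ i\equiv1\bmod|u|\}|$. A finite binary word $w$ is $\ell$-perfect if $|w|$ is a multiple of $\ell$ and every word $u$ of length $\ell$ satisfies $|w|^{al}_u=|w|/(\ell2^\ell)$. *)

(* Defs.v *)
From mathcomp Require Import all_boot.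
Set Implicit Arguments. Unset Strict Implicit. Unset Printing Implicit Defensive.

(* Binary words are [seq bool]; letter 0 = false, 1 = true.
   Positions are 0-indexed here: the paper's 1-indexed position i is index i-1. *)

(* even(a_1 ... a_m) = a_2 a_4 ... : letters at 0-indexed odd positions. *)
Definition even_word (z : seq bool) : seq bool :=
  [seq nth false z i | i <- iota 0 (size z) & odd i].

(* |w|^al_u : number of (0-indexed) positions i with i = 0 mod |u|
   (paper: 1-indexed i = 1 mod |u|) such that w[i..i+|u|-1] = u. *)
Definition aligned_count (w u : seq bool) : nat :=
  count (fun i => (i %% size u == 0) && (take (size u) (drop i w) == u))
        (iota 0 (size w)).

(* w is l-perfect: l divides |w| and every word u of length l satisfies
   |w|^al_u = |w| / (l 2^l)  (stated without division, as an exact equality). *)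
Definition perfect (l : nat) (w : seq bool) : Prop :=
  l %| size w /\
  forall u : seq bool, size u = l -> aligned_count w u * (l * 2 ^ l) = size w.

(* Main.v *)
Require Import Defs.
From mathcomp Require Import all_boot zify.
Set Implicit Arguments. Unset Strict Implicit. Unset Printing Implicit Defensive.

Fixpoint words (L : nat) : seq (seq bool) :=
  if L is L'.+1 then [seq false :: w | w <- words L'] ++ [seq true :: w | w <- words L']
  else [:: [::]].

Lemma size_words L : size (words L) = 2 ^ L.
Proof. elim: L => //= L IH; rewrite size_cat !size_map IH expnS; lia. Qed.

Lemma mem_words L w : (w \in words L) = (size w == L).
Proof.
elim: L w => [|L IH] [|b w] //=; rewrite mem_cat.
- by apply/negP; case/orP => /mapP [? _ ].
  

- rewrite eqSS; apply/orP/idP.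
  + by case=> /mapP [v Hv [_ ->]]; rewrite -IH.
  + move=> Hs; case: b; [right|left]; apply/mapP; exists w => //; by rewrite IH.
Qed.

Lemma uniq_words L : uniq (words L).
Proof.
elim: L => //= L IH; rewrite cat_uniq !map_inj_uniq ?IH /=; try by move=> x y [].
rewrite andbT; apply/hasPn => x /mapP [v _ ->]; by apply/mapP => [[y _ []]].
Qed.

Definition sumb (s : seq bool) := count id s.

Lemma sumn_mapD (T : Type) (f g : T -> nat) s :
  sumn [seq f x + g x | x <- s] = sumn (map f s) + sumn (map g s).
Proof. elim: s => /=; [lia| move=> x s ->; lia]. Qed.

Lemma sumn_const (T : Type) (c : nat) (s : seq T) : sumn [seq c | _ <- s] = c * size s.
Proof. elim: s => /=; [lia| move=> x s ->; lia]. Qed.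

Lemma count_partition (T S : eqType) (P : pred T) (f : T -> S) (E : seq S) (Bs : seq T) :
  uniq E -> all (fun B => f B \in E) Bs ->
  count P Bs = sumn [seq count (fun B => P B && (f B == v)) Bs | v <- E].
Proof.
move=> uE; elim: Bs => [|B Bs IH] /=.
  by move=> _; rewrite (sumn_const 0) mul0n.
move=> /andP [HB Ha]; rewrite (IH Ha) sumn_mapD; congr (_ + _).
case: (P B) => /=; last by rewrite (sumn_const 0) mul0n.
clear IH Ha; move: HB; elim: E uE => //= v E IHE /andP [vE uE]; rewrite in_cons.
case/orP => [/eqP ->| HB].
  rewrite eqxx /=; suff -> : sumn [seq nat_of_bool (v == x) | x <- E] = 0 by [].
  transitivity (sumn [seq 0 | _ <- E]); last by rewrite sumn_const.
  congr sumn; apply/eq_in_map => x xE; apply/eqP; rewrite eqb0; apply/eqP => Hx.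
  by move: vE; rewrite Hx xE.
rewrite -IHE //; suff -> : (f B == v) = false by [].
by apply/eqP => Hx; move: vE; rewrite -Hx HB.
Qed.
Arguments count_partition {T S} P f E Bs.

Definition blk (l : nat) (w : seq bool) j := take l (drop (j * l) w).
Definition blocks l w := [seq blk l w j | j <- iota 0 (size w %/ l)].

Lemma count_mod l m (P : pred nat) : 0 < l ->
  count (fun i => (i %% l == 0) && P i) (iota 0 (m * l)) = count (fun j => P (j * l)) (iota 0 m).
Proof.
move=> l0; elim: m => [|m IH]; first by rewrite mul0n.
rewrite mulSnr iotaD count_cat IH -addn1 iotaD count_cat /= add0n; congr (_ + _).
clear IH; case: l l0 => // l' _ /=; rewrite modnMl eqxx /= addn0.
rewrite (eq_in_count (a2 := pred0)) ?count_pred0 ?addn0 //.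
move=> i; rewrite mem_iota => /andP [H1 H2] /=.
have -> : i = m * l'.+1 + (i - m * l'.+1) by lia.
rewrite modnMDl modn_small; last by lia.
by apply/negbTE; lia.
Qed.

Lemma ac_blocks l w u : size u = l -> 0 < l -> l %| size w ->
  aligned_count w u = count (pred1 u) (blocks l w).
Proof.
move=> su l0 dl; rewrite /aligned_count /blocks su count_map.
have {1}-> : size w = (size w %/ l) * l by rewrite divnK.
rewrite count_mod //; apply: eq_count => j /=; by rewrite /blk eq_sym.
Qed.

Lemma perfectP l w : 0 < l -> perfect l w <->
  (l %| size w /\ forall u, size u = l -> count (pred1 u) (blocks l w) * (l * 2 ^ l) = size w).
Proof.
move=> l0; split=> [[dl H]|[dl H]]; split=> // u su.
  by rewrite -ac_blocks // H.
by rewrite (ac_blocks su) // H.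
Qed.

Lemma size_blk l w j : j.+1 * l <= size w -> size (blk l w j) = l.
Proof. move=> H; rewrite /blk size_takel // size_drop; nia. Qed.

Lemma count_iota2 (P : pred nat) m : count P (iota 0 (2 * m)) =
  count (fun j => P (2 * j)) (iota 0 m) + count (fun j => P (2 * j + 1)) (iota 0 m).
Proof.
elim: m => // m IH.
have -> : 2 * m.+1 = 2 * m + 2 by lia.
rewrite iotaD count_cat IH -[m.+1]addn1 !iotaD !count_cat /= !add0n !addn0.
have -> : 2 * m + 1 = (2 * m).+1 by lia.
lia.
Qed.

Lemma blk_even L w j : blk L w (2 * j) = take L (blk (2 * L) w j).
Proof. rewrite /blk take_takel; last by lia. congr (take _ (drop _ _)); lia. Qed.

Lemma blk_odd L w j : blk L w (2 * j + 1) = drop L (blk (2 * L) w j).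
Proof.
rewrite /blk; have -> : 2 * L = L + L by lia.
rewrite -take_drop drop_drop; congr (take _ (drop _ _)); lia.
Qed.

Lemma sumn_mul (T : eqType) (f : T -> nat) (E : seq T) K N :
  (forall v, v \in E -> f v * K = N) -> sumn (map f E) * K = size E * N.
Proof.
elim: E => //= v E IH H; rewrite mulnDl H ?mem_head // IH //.
by move=> x xE; apply: H; rewrite in_cons xE orbT.
Qed.

Lemma all_blocks_size l w m : size w = m * l -> forall B, B \in [seq blk l w j | j <- iota 0 m] -> size B = l.
Proof.
move=> sw B /mapP [j]; rewrite mem_iota => /andP [_ Hj] ->.
apply: size_blk; rewrite sw; apply: leq_mul => //.
Qed.

Lemma perfect_half L w : 0 < L -> perfect (2 * L) w -> perfect L w.
Proof.
move=> L0 /perfectP []; first by lia.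
move=> dl H; apply/perfectP => //.
set m := size w %/ (2 * L).
have sw : size w = m * (2 * L) by rewrite divnK.
split; first by apply: dvdn_trans dl; apply: dvdn_mull.
move=> u su.
have -> : blocks L w = [seq blk L w j | j <- iota 0 (2 * m)].
  by rewrite /blocks sw mulnA mulnK // mulnC.
have eB : blocks (2 * L) w = [seq blk (2 * L) w j | j <- iota 0 m].
  by rewrite /blocks sw mulnK // muln_gt0.
move: (H) => H'; rewrite eB in H'.
set Bs := [seq blk (2 * L) w j | j <- iota 0 m] in H'.
have sB := all_blocks_size sw.
rewrite count_map count_iota2.
under eq_count => j do rewrite /= blk_even.
under [X in _ + X]eq_count => j do rewrite /= blk_odd.
rewrite -(count_map _ (fun B => take L B == u)) -(count_map _ (fun B => drop L B == u)).
rewrite -/Bs.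
have aE : forall f, (forall B, size B = 2 * L -> size (f B) = L) -> all (fun B => f B \in words L) Bs.
  move=> f Hf; apply/allP => B HB; rewrite mem_words; apply/eqP; apply: Hf; exact: sB.
rewrite (count_partition _ (drop L) (words L) Bs (uniq_words L) (aE _ _)); last by move=> B; rewrite size_drop => ->; lia.
rewrite [X in _ + X](count_partition _ (take L) (words L) Bs (uniq_words L) (aE _ _)); last by move=> B HB; rewrite size_takel // HB; lia.
set K := 2 * L * 2 ^ (2 * L).
have HA : sumn [seq count (fun B => (take L B == u) && (drop L B == v)) Bs | v <- words L] * K = 2 ^ L * size w.
  rewrite -(size_words L); apply: sumn_mul => v; rewrite mem_words => /eqP sv.
  rewrite -(H (u ++ v)); last by rewrite size_cat su sv; lia.
  congr (_ * _); rewrite eB; apply: eq_in_count => B HB /=.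
  by rewrite -{3}(cat_take_drop L B) eqseq_cat // size_takel // (sB B HB); lia.
have HB' : sumn [seq count (fun B => (drop L B == u) && (take L B == v)) Bs | v <- words L] * K = 2 ^ L * size w.
  rewrite -(size_words L); apply: sumn_mul => v; rewrite mem_words => /eqP sv.
  rewrite -(H (v ++ u)); last by rewrite size_cat su sv; lia.
  congr (_ * _); rewrite eB; apply: eq_in_count => B HB /=.
  by rewrite -{3}(cat_take_drop L B) eqseq_cat 1?andbC // size_takel // (sB B HB); lia.
move: HA HB'; set A := sumn _; set B := sumn _.
have eK : K = 2 ^ L * (2 * (L * 2 ^ L)) by rewrite /K mul2n -addnn expnD; lia.
rewrite eK => HA HB'.
have HA2 : 2 ^ L * (A * (2 * (L * 2 ^ L))) = 2 ^ L * size w by rewrite -HA mulnCA.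
have HB2 : 2 ^ L * (B * (2 * (L * 2 ^ L))) = 2 ^ L * size w by rewrite -HB' mulnCA.
move/eqP: HA2; rewrite eqn_pmul2l ?expn_gt0 // => /eqP HA3.
move/eqP: HB2; rewrite eqn_pmul2l ?expn_gt0 // => /eqP HB3.
nia.
Qed.

Fixpoint interleave (x y : seq bool) : seq bool :=
  match x, y with a :: x', b :: y' => a :: b :: interleave x' y' | _, _ => [::] end.

Lemma interleave_nil_r x : interleave x [::] = [::].
Proof. by case: x. Qed.

Lemma size_interleave x y : size x = size y -> size (interleave x y) = 2 * size x.
Proof. elim: x y => [|a x IH] [|b y] //= [/IH ->]; lia. Qed.

Lemma nth_interleave_odd x y i : size x = size y ->
  nth false (interleave x y) (2 * i + 1) = nth false y i.
Proof.
elim: x y i => [|a x IH] [|b y] i //=; first by rewrite !nth_nil.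
move=> [] Hs.
case: i => [|i]; first by []. rewrite (_ : 2 * i.+1 + 1 = (2 * i + 1).+2); last by lia.
exact: (IH y i Hs).
Qed.

Lemma filter_odd_iota s m :
  [seq i <- iota (2 * s) (2 * m) | odd i] = [seq 2 * i + 1 | i <- iota s m].
Proof.
elim: m s => // m IH s.
have -> : 2 * m.+1 = (2 * m).+2 by lia.
have o1 : odd (2 * s) = false by rewrite oddM.
have o2 : odd (2 * s).+1 = true by rewrite /= oddM.
have e3 : (2 * s).+2 = 2 * s.+1 by lia.
move: o1 o2 e3 (IH s.+1); set t := 2 * s; set k := 2 * m => o1 o2 e3 IH'.
rewrite /= o1 /= e3 IH' /t.
by rewrite addn1.
Qed.

Lemma even_interleave x y : size x = size y -> even_word (interleave x y) = y.
Proof.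
move=> Hs; rewrite /even_word size_interleave // -{1}(muln0 2) filter_odd_iota -map_comp.
rewrite (eq_map (g := nth false y)); last by move=> i /=; rewrite nth_interleave_odd.
by rewrite -/(mkseq _ _) Hs mkseq_nth.
Qed.

Lemma drop_interleave k x y : drop (2 * k) (interleave x y) = interleave (drop k x) (drop k y).
Proof.
elim: k x y => [|k IH] x y; first by rewrite !drop0.
case: x => [|a x]; first by [].
case: y => [|b y]; first by rewrite !interleave_nil_r drop_oversize.
rewrite (_ : 2 * k.+1 = (2 * k).+2); last by lia.
exact: IH.
Qed.

Lemma take_interleave k x y : take (2 * k) (interleave x y) = interleave (take k x) (take k y).
Proof.
elim: k x y => [|k IH] x y; first by rewrite !take0.
case: x => [|a x]; first by [].
case: y => [|b y]; first by rewrite !interleave_nil_r take_oversize.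
rewrite (_ : 2 * k.+1 = (2 * k).+2); last by lia.
by rewrite [take _ _]/= IH.
Qed.

Lemma blk_interleave L x y j : blk (2 * L) (interleave x y) j = interleave (blk L x j) (blk L y j).
Proof.
by rewrite /blk (_ : j * (2 * L) = 2 * (j * L)) ?drop_interleave ?take_interleave //; lia.
Qed.

Lemma interleave_eq a b a' b' : size a = size b -> size a' = size b' -> size a = size a' ->
  (interleave a b == interleave a' b') = (a == a') && (b == b').
Proof.
elim: a b a' b' => [|c a IH] [|d b] [|c' a'] [|d' b'] H1 H2 H3; try discriminate; first by [].
case: H1 => H1; case: H2 => H2; case: H3 => H3.
rewrite [interleave _ _]/= [interleave (c' :: a') _]/=.
rewrite !eqseq_cons IH //; by case: (c == c'); case: (d == d'); case: (a == a').
Qed.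

Lemma interleave_split L u : size u = 2 * L ->
  exists a b, [/\ size a = L, size b = L & u = interleave a b].
Proof.
elim: L u => [|L IH] [|c [|d u]] //=; try lia.
- by move=> _; exists [::], [::].
- move=> Hs; have [|a [b [Ha Hb ->]]] := IH u; first by lia.
  by exists (c :: a), (d :: b); rewrite /= Ha Hb.
Qed.

Lemma size_flatten_const L (xs : seq (seq bool)) : all (fun s => size s == L) xs ->
  size (flatten xs) = size xs * L.
Proof. elim: xs => //= s xs IH /andP [/eqP Hs /IH H]; rewrite size_cat Hs H; lia. Qed.

Lemma blk_flatten L (xs : seq (seq bool)) j : all (fun s => size s == L) xs -> j < size xs ->
  blk L (flatten xs) j = nth [::] xs j.
Proof.
rewrite /blk; elim: xs j => //= s xs IH [|j] /andP [/eqP Hs Ha] Hj.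
  by rewrite mul0n drop0 take_size_cat.
by rewrite mulSn addnC -drop_drop drop_size_cat // IH.
Qed.

Lemma rank_count (s : seq (seq bool)) b (P : pred nat) :
  count (fun j => (nth [::] s j == b) && P (count (pred1 b) (take j s))) (iota 0 (size s))
  = count P (iota 0 (count (pred1 b) s)).
Proof.
elim/last_ind: s => [|s e IH] //.
rewrite size_rcons -addn1 iotaD count_cat /= addn0 add0n.
rewrite (eq_in_count (a2 := fun j => (nth [::] s j == b) && P (count (pred1 b) (take j s)))); last first.
  move=> j; rewrite mem_iota => /andP [_ Hj] /=.
  by rewrite nth_rcons Hj -cats1 takel_cat // ltnW.
rewrite IH nth_rcons ltnn eqxx -cats1 take_size_cat // count_cat /= addn0.
case: (e == b) => /=; last by rewrite ?addn0.
by rewrite iotaD count_cat /= addn0.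
Qed.

Lemma count_period M q r : r < M ->
  count (fun t => t %% M == r) (iota 0 (q * M)) = q.
Proof.
move=> rM; elim: q => [|q IH]; first by rewrite mul0n.
rewrite mulSnr iotaD count_cat IH ?add0n -(addn0 (q * M)) iotaDl count_map.
under eq_count => t do rewrite /= modnMDl.
rewrite (eq_in_count (a2 := pred1 r)); last first.
  by move=> t; rewrite mem_iota /= => Ht; rewrite modn_small //; lia.
rewrite count_uniq_mem ?iota_uniq // mem_iota rM; lia.
Qed.

Definition enc L t := nth [::] (words L) t.

Definition xblocks L y :=
  let ys := blocks L y in
  [seq enc L (count (pred1 (nth [::] ys j)) (take j ys) %% 2 ^ L) | j <- iota 0 (size ys)].

Definition step L y := interleave (flatten (xblocks L y)) y.

Lemma size_enc L t : size (enc L (t %% 2 ^ L)) = L.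
Proof.
apply/eqP; rewrite -mem_words /enc; apply: mem_nth.
by rewrite size_words ltn_mod expn_gt0.
Qed.

Lemma step_props L y : 0 < L -> perfect L y -> (2 * L * 2 ^ (2 * L)) %| 2 * size y ->
  [/\ size (step L y) = 2 * size y, even_word (step L y) = y & perfect (2 * L) (step L y)].
Proof.
move=> L0 /perfectP [] // dl H dd.
set m := size y %/ L.
have sy : size y = m * L by rewrite divnK.
set ys := blocks L y.
have eys : ys = [seq blk L y j | j <- iota 0 m] by [].
have sys : size ys = m by rewrite eys size_map size_iota.
set xs := xblocks L y.
have axs : all (fun s => size s == L) xs.
  by apply/allP => s /mapP [j _ ->]; rewrite size_enc.
have sxs : size xs = m by rewrite /xs /xblocks size_map size_iota -/ys sys.
have sx : size (flatten xs) = size y by rewrite (size_flatten_const axs) sxs sy.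
have sw : size (step L y) = 2 * size y by rewrite /step size_interleave ?sx.
split => //; first by rewrite /step even_interleave ?sx.
apply/perfectP; first by lia.
split; first by rewrite sw sy mulnCA dvdn_mull.
move=> u su.
have [a [b [sa sb ->]]] := interleave_split su.
have eB : blocks (2 * L) (step L y) = [seq interleave (nth [::] xs j) (nth [::] ys j) | j <- iota 0 m].
  rewrite /blocks sw sy mulnCA mulnK; last by lia.
  apply/eq_in_map => j; rewrite mem_iota => /andP [_ Hj].
  rewrite /step blk_interleave blk_flatten // ?sxs //.
  by rewrite eys (nth_map 0) ?size_iota // nth_iota.
rewrite eB count_map.
have syj : forall j, j < m -> size (nth [::] ys j) = L.
  move=> j Hj; rewrite eys (nth_map 0) ?size_iota // nth_iota // add0n.
  by apply: size_blk; rewrite sy leq_mul2r Hj orbT.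
have sxj : forall j, j < m -> size (nth [::] xs j) = L.
  by move=> j Hj; apply/eqP; apply: (allP axs); apply: mem_nth; rewrite sxs.
set r0 := index a (words L).
have r0M : r0 < 2 ^ L by rewrite -size_words index_mem mem_words sa.
rewrite (eq_in_count (a2 := fun j => (nth [::] ys j == b) &&
      ((fun t => t %% 2 ^ L == r0) (count (pred1 (nth [::] ys j)) (take j ys))))); last first.
  move=> j; rewrite mem_iota => /andP [_ Hj] /=.
  rewrite interleave_eq ?sxj ?syj ?sa ?sb // andbC.
  case: eqP => //= Hb.
  rewrite /xs /xblocks -/ys (nth_map 0) ?size_iota ?sys // nth_iota // add0n /enc.
  have -> : a = nth [::] (words L) r0 by rewrite nth_index // mem_words sa.
  rewrite nth_uniq ?uniq_words ?size_words ?ltn_mod ?expn_gt0 // Hb.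
rewrite -sys.
have -> : count (fun j => (nth [::] ys j == b) &&
    (count (pred1 (nth [::] ys j)) (take j ys) %% 2 ^ L == r0)) (iota 0 (size ys))
  = count (fun j => (nth [::] ys j == b) &&
    (count (pred1 b) (take j ys) %% 2 ^ L == r0)) (iota 0 (size ys)).
  by apply: eq_count => j /=; case: eqP => // ->.
rewrite (rank_count ys b (fun t => t %% 2 ^ L == r0)).
set c := count (pred1 b) ys.
have Hc : c * (L * 2 ^ L) = size y by apply: H.
have dc : 2 ^ L %| c.
  have : L * 2 ^ L * 2 ^ L %| L * 2 ^ L * c.
    move: dd; rewrite -Hc (_ : 2 * L * 2 ^ (2 * L) = 2 * (L * 2 ^ L * 2 ^ L)); last first.
      by rewrite mul2n -addnn expnD; lia.
    by rewrite dvdn_pmul2l // [L * 2 ^ L * c]mulnC.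
  by rewrite dvdn_pmul2l // muln_gt0 L0 expn_gt0.
have ec : c = (c %/ 2 ^ L) * 2 ^ L by rewrite divnK.
rewrite ec count_period // sw -Hc {2}ec.
rewrite mul2n -addnn expnD; lia.
Qed.

Fixpoint st (n : nat) : seq bool * nat :=
  match n with
  | 0 | 1 | 2 => ([:: true; false; false; true], 0)
  | n'.+1 => let (w, k) := st n' in
      if k.+1 + 2 ^ k.+1 <= n'.+1 then (step (2 ^ k) w, k.+1) else (step (2 ^ k.-1) w, k)
  end.

Lemma stS n : 2 <= n -> st n.+1 =
  let (w, k) := st n in
      if k.+1 + 2 ^ k.+1 <= n.+1 then (step (2 ^ k) w, k.+1) else (step (2 ^ k.-1) w, k).
Proof. by case: n => [|[|n]]. Qed.

Definition Inv n := let (w, k) := st n in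
  [/\ size w = 2 ^ n, perfect (2 ^ k) w, k + 2 ^ k <= n & (k = 0 -> n = 2)].

Lemma Inv2 : Inv 2.
Proof.
rewrite /Inv /=; split => //; split => // u su.
case: u su => [|b [|c u]] //= _; by case: b.
Qed.

Lemma Inv_step n : 2 <= n -> Inv n ->
  [/\ Inv n.+1, even_word (st n.+1).1 = (st n).1 & (st n).2 <= (st n.+1).2].
Proof.
move=> n2; rewrite /Inv (stS n2); case: (st n) => w k [sw pw hk k0].
case: ifP => hd.
  have [] := step_props (L := 2 ^ k) (expn_gt0 _ _) pw.
    by rewrite sw -!expnS -expnD dvdn_exp2l.
  move=> s1 e1 p1; split => //=; split => //.
  - by rewrite s1 sw expnS.
  - by rewrite expnS.
have k1 : 0 < k.
  case: k hk k0 hd {pw} => // _ /(_ erefl) -> //.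
have ek : 2 ^ k = 2 * 2 ^ k.-1 by rewrite -expnS prednK.
have pw' : perfect (2 ^ k.-1) w by apply: perfect_half; rewrite ?expn_gt0 // -ek.
have [] := step_props (L := 2 ^ k.-1) (expn_gt0 _ _) pw'.
  by rewrite -ek sw -expnS -expnD dvdn_exp2l //; lia.
move=> s1 e1 p1; split => //=; split => //.
- by rewrite s1 sw expnS.
- by rewrite ek.
- lia.
- lia.
Qed.

Lemma Inv_all n : 2 <= n -> Inv n.
Proof.
elim: n => // n IH; rewrite leq_eqVlt => /orP [/eqP <-|]; first exact: Inv2.
by move=> hn; have [] := Inv_step hn (IH hn).
Qed.

Definition kseq n := (st n).2.

Lemma kseqS n : 2 <= n -> kseq n <= kseq n.+1.
Proof. by move=> n2; have [] := Inv_step n2 (Inv_all n2). Qed.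

Lemma kseq_mono n m : 2 <= n -> n <= m -> kseq n <= kseq m.
Proof.
move=> n2; elim: m => [|m IH]; first by rewrite leqn0 => /eqP ->.
rewrite leq_eqVlt => /orP [/eqP ->|] //; rewrite ltnS => Hm.
apply: leq_trans (IH Hm) (kseqS (leq_trans n2 Hm)).
Qed.

Lemma kseq_grow n : 2 <= n -> exists2 m, 2 <= m & kseq n < kseq m.
Proof.
move=> n2; set k := kseq n; set N := n + k + 2 ^ k.+1.
have nN : n <= N by rewrite /N -addnA leq_addr.
have kN := kseq_mono n2 nN.
case: (ltnP k (kseq N)) => hk.
  by exists N => //; apply: leq_trans nN.
have eN : kseq N = k by apply/eqP; rewrite eqn_leq hk kN.
have N2 : 2 <= N by apply: leq_trans nN.
exists N.+1; first by apply: leq_trans N2 _.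
rewrite /kseq (stS N2); move: eN; rewrite /kseq; case: (st N) => w k' /= ->.
by rewrite ifT //= /N; lia.
Qed.

Lemma kseq_unbounded B : exists2 n, 2 <= n & B <= kseq n.
Proof.
elim: B => [|B [n n2 hB]]; first by exists 2.
have [m m2 hm] := kseq_grow n2.
by exists m => //; apply: leq_ltn_trans hm.
Qed.

Theorem corollary12 :
  exists (w : nat -> seq bool) (l : nat -> nat),
    [/\ forall n, 1 <= n -> [/\ size (w n) = 2 ^ n,
                              even_word (w n.+1) = w n,
                              0 < l n & perfect (l n) (w n)],
        (forall n m, 1 <= n -> n <= m -> l n <= l m),
        (forall B, exists2 n, 1 <= n & B < l n)
      & w 1 = [:: false; true]].
Proof.
exists (fun n => if n == 1 then [:: false; true] else (st n).1).
exists (fun n => if n == 1 then 1 else 2 ^ kseq n).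
split => //.
- move=> n; rewrite leq_eqVlt => /orP [/eqP <-|n2].
    split => //; split => // u su.
    case: u su => [|b [|c u]] //= _; by case: b.
  have [_ Hev _] := Inv_step n2 (Inv_all n2).
  rewrite (_ : (n == 1) = false); last by case: n n2 {Hev} => [|[|n]].
  rewrite (_ : (n.+1 == 1) = false); last by case: n n2 {Hev} => [|[|n]].
  rewrite Hev; have := Inv_all n2; rewrite /Inv /kseq.
  case: (st n) => w k /= [sw pw _ _].
  by split => //; rewrite expn_gt0.
- move=> n m; rewrite leq_eqVlt => /orP [/eqP <-|n2] nm /=.
    by case: ifP => // _; rewrite expn_gt0.
  rewrite (_ : (n == 1) = false); last by case: n n2 {nm} => [|[|n]].
  have m2 : 2 <= m by apply: leq_trans nm.
  rewrite (_ : (m == 1) = false); last by case: m m2 {nm} => [|[|m]].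
  by rewrite leq_pexp2l // kseq_mono.
- move=> B; have [n n2 hB] := kseq_unbounded B.
  exists n; first by apply: ltnW.
  rewrite (_ : (n == 1) = false); last by case: n n2 {hB} => [|[|n]].
  by apply: leq_trans (ltn_expl B (isT : 1 < 2)) _; rewrite leq_pexp2l.
Qed.
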